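(* Let $\mathcal{J}$ (true jobs) and $\hat{\mathcal{J}}$ (predicted jobs, $\mathtt{OPT}(\hat{\mathcal{J}})>0$) be given and suppose $\eta_2\le 1$. Then $\mathtt{OPT}(\mathcal{J}\cap\hat{\mathcal{J}})\ge\big(1-\eta_2^{1/\alpha}\big)^\alpha\,\mathtt{OPT}(\hat{\mathcal{J}})$. Moreover, let OfflineAlg be an offline algorithm that is $\gamma_{\mathrm{off}}$-competitive, i.e. $\mathtt{OFF}(\mathcal{K}):=\mathrm{cost}(\textsc{OfflineAlg}(\mathcal{K}),\mathcal{K})\le\gamma_{\mathrm{off}}\,\mathtt{OPT}(\mathcal{K})$ for every job set $\mathcal{K}$, and let $\lambda\in(0,1]$ with $\lambda\gamma_{\mathrm{off}}\le1$. If $\mathtt{OFF}(\mathcal{J})\le\lambda\,\mathtt{OFF}(\hat{\mathcal{J}})$, then $\eta_2\ge\big(1-(\lambda\gamma_{\mathrm{off}})^{1/\alpha}\big)^\alpha$.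
   Context: GES setting: single machine; a job is $(j,r_j,p_j)$ with identifier $j$, release time $r_j\ge0$, processing time $p_j>0$. A feasible schedule for job set $\mathcal{J}$ is a family $\{s_j(t)\}$ of nonnegative speeds with $s_j(t)=0$ for $t<r_j$ and $\int s_j=p_j$; total speed $s(t)=\sum_j s_j(t)$; energy $E(S)=\int s(t)^\alpha dt$ with $\alpha>1$; work profile $w^S_j(t)=p_j-\int_{r_j}^t s_j$. The quality cost $F(S,\mathcal{J})$ depends only on the work profiles and parameters of the jobs in $\mathcal{J}$ and is subadditive ($F(S,\mathcal{J}_1\cup\mathcal{J}_2)\le F(S,\mathcal{J}_1)+F(S,\mathcal{J}_2)$) and monotone (pointwise smaller work profiles give smaller $F$). $\mathrm{cost}(S,\mathcal{J})=E(S)+F(S,\mathcal{J})$ and $\mathtt{OPT}(\mathcal{J})$ is the minimum cost over feasible schedules ($\mathtt{OPT}(\emptyset)=0$). Predictions: a set $\hat{\mathcal{J}}$ of predicted jobs $(j,\hat r_j,\hat p_j)$. $\mathcal{J}\cap\hat{\mathcal{J}}$ denotes the correctly predicted jobs, i.e. jobs appearing in both sets with the same identifier and identical parameters; $\mathcal{J}\setminus\hat{\mathcal{J}}$ denotes the true jobs not in $\mathcal{J}\cap\hat{\mathcal{J}}$, and $\hat{\mathcal{J}}\setminus\mathcal{J}$ the predicted jobs not in $\mathcal{J}\cap\hat{\mathcal{J}}$. The error components are $\eta_1=\mathtt{OPT}(\mathcal{J}\setminus\hat{\mathcal{J}})/\mathtt{OPT}(\hat{\mathcal{J}})$ and $\eta_2=\mathtt{OPT}(\hat{\mathcal{J}}\setminus\mathcal{J})/\mathtt{OPT}(\hat{\mathcal{J}})$.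 *)

(* Defs.v *)
From HB Require Import structures.
From mathcomp Require Import all_boot all_order all_algebra finmap.
From mathcomp Require Import all_classical all_reals all_analysis.
Set Implicit Arguments. Unset Strict Implicit. Unset Printing Implicit Defensive.
Import Order.TTheory GRing.Theory Num.Theory.
Import numFieldNormedType.Exports.
Local Open Scope classical_set_scope.
Local Open Scope ring_scope.

Definition job (R : realType) := (nat * R * R)%type.
Definition jid {R : realType} (j : job R) : nat := j.1.1.
Definition rel {R : realType} (j : job R) : R := j.1.2.
Definition proc {R : realType} (j : job R) : R := j.2.

Definition valid_job {R : realType} (j : job R) := 0 <= rel j /\ 0 < proc j.
Definition valid_jobs {R : realType} (K : {fset job R}) :=
  forall j, j \in K -> valid_job j.

(* A schedule: speed s_j(t) of every job j at every time t. *)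
Definition schedule (R : realType) := job R -> R -> R.

Definition feasible {R : realType} (K : {fset job R}) (s : schedule R) :=
  forall j, j \in K ->
    [/\ (forall t, 0 <= s j t),
        (forall t, t < rel j -> s j t = 0),
        measurable_fun setT (s j) &
        (\int[lebesgue_measure]_t (s j t)%:E = (proc j)%:E)%E].

Definition energy {R : realType} (alpha : R) (K : {fset job R}) (s : schedule R)
  : \bar R :=
  (\int[lebesgue_measure]_t ((\sum_(j <- K) s j t) `^ alpha)%:E)%E.

Definition work {R : realType} (s : schedule R) : job R -> R -> R :=
  fun j t => proc j - fine (\int[lebesgue_measure]_(x in `[rel j, t]) (s j x)%:E)%E.

(* Quality cost: F K w, where w are the work profiles. *)
Definition quality_cost (R : realType) := {fset job R} -> (job R -> R -> R) -> \bar R.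

Definition admissible_F {R : realType} (F : quality_cost R) :=
  [/\
      (forall K w w', (forall j, j \in K -> forall t, w j t = w' j t) -> F K w = F K w'),
      (forall K w, (0 <= F K w)%E),
      (forall K1 K2 w, (F (K1 `|` K2)%fset w <= F K1 w + F K2 w)%E) &
      (* monotone: pointwise smaller work profiles (absent jobs = zero work) *)
      (forall K1 K2 w1 w2, (K1 `<=` K2)%fset ->
         (forall j, j \in K1 -> forall t, w1 j t <= w2 j t) ->
         (F K1 w1 <= F K2 w2)%E)].

Definition cost {R : realType} (alpha : R) (F : quality_cost R)
  (K : {fset job R}) (s : schedule R) : \bar R :=
  (energy alpha K s + F K (work s))%E.

Definition OPT {R : realType} (alpha : R) (F : quality_cost R) (K : {fset job R})
  : \bar R :=
  if K == fset0 then 0%E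
  else ereal_inf [set cost alpha F K s | s in [set s | feasible K s]].

Definition eta2 {R : realType} (alpha : R) (F : quality_cost R)
  (J Jh : {fset job R}) : \bar R :=
  (OPT alpha F (Jh `\` J)%fset / OPT alpha F Jh)%E.

(* Main.v *)
Require Import Defs.
From HB Require Import structures.
From mathcomp Require Import all_boot all_order all_algebra finmap.
From mathcomp Require Import all_classical all_reals all_analysis.
From mathcomp Require Import ring lra.
Import Order.TTheory GRing.Theory Num.Theory.
Local Open Scope classical_set_scope.
Local Open Scope ring_scope.
Set Implicit Arguments. Unset Strict Implicit. Unset Printing Implicit Defensive.

Lemma conv4 (R : realType) (al u v d : R) : 1 <= al ->
  0 <= u -> u <= v -> 0 <= d ->
  v `^ al + (u + d) `^ al <= u `^ al + (v + d) `^ al.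
Proof.
move=> al1 u0 uv d0.
have [d00|dpos] := eqVneq d 0.
  by rewrite d00 !addr0 addrC.
have Lp : 0 < v + d - u.
  rewrite subr_gt0 (le_lt_trans uv)// ltrDl lt_neqAle eq_sym dpos d0 //.
set L := v + d - u.
have t0 : 0 <= d / L by rewrite divr_ge0// ltW.
have t1 : d / L <= 1 by rewrite ler_pdivrMr// mul1r /L addrAC lerDr subr_ge0.
have t0' : 0 <= 1 - d / L by rewrite subr_ge0.
have t1' : 1 - d / L <= 1 by rewrite gerBl.
have hc := convex_powR al1.
have y0 : 0 <= v + d by rewrite addr_ge0// (le_trans u0).
have Du : u \in (`[0, +oo[%classic : set R) by rewrite inE /= in_itv /= andbT.
have Dy : (v + d) \in (`[0, +oo[%classic : set R) by rewrite inE /= in_itv /= andbT.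
have h1 := hc (Itv01 t0 t1) _ _ Du Dy.
have h2 := hc (Itv01 t0' t1') _ _ Du Dy.
have Lne : L != 0 by rewrite gt_eqF.
set c1 := (X in X `^ al <= _) in h1.
set c2 := (X in X `^ al <= _) in h2.
have e1 : c1 = v.
  rewrite /c1; change (d / L * u + (1 - d/L) * (v+d) = v).
  rewrite /L; field; by rewrite -/L.
have e2 : c2 = u + d.
  rewrite /c2; change ((1 - d / L) * u + (1 - (1 - d/L)) * (v+d) = u + d).
  rewrite /L; field; by rewrite -/L.
move: h1 h2; rewrite e1 e2 => h1 h2.
have := lerD h1 h2.
move=> /le_trans; apply.
set P := u `^ al; set Q := (v + d) `^ al.
change (d/L * P + (1 - d/L) * Q + ((1-d/L)*P + (1-(1-d/L))*Q) <= P + Q).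
by rewrite le_eqVlt; apply/orP; left; apply/eqP; ring.
Qed.

Lemma powRK1 (R : realType) (al z : R) : al != 0 -> 0 <= z ->
  (z `^ al^-1) `^ al = z.
Proof. by move=> a0 z0; rewrite -powRrM mulVf // powRr1. Qed.

Lemma powRK2 (R : realType) (al z : R) : al != 0 -> 0 <= z ->
  (z `^ al) `^ al^-1 = z.
Proof. by move=> a0 z0; rewrite -powRrM mulfV // powRr1. Qed.

Lemma key_real (R : realType) (al a b x y : R) : 1 <= al ->
  0 <= a -> 0 <= b -> 0 <= x -> 0 <= y ->
  (a + b) `^ al + x + y <=
  ((a `^ al + x) `^ al^-1 + (b `^ al + y) `^ al^-1) `^ al.
Proof.
move=> al1 a0 b0 x0 y0.
have al0 : al != 0 by rewrite gt_eqF // (lt_le_trans _ al1).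
have ali : 0 <= al^-1 by rewrite invr_ge0 (le_trans _ al1).
set A := (a `^ al + x) `^ al^-1; set B := (b `^ al + y) `^ al^-1.
have hA : A `^ al = a `^ al + x by rewrite powRK1 // addr_ge0 // powR_ge0.
have hB : B `^ al = b `^ al + y by rewrite powRK1 // addr_ge0 // powR_ge0.
have aA : a <= A.
  rewrite -{1}(powRK2 al0 a0) /A ge0_ler_powR // ?nnegrE ?powR_ge0 ?addr_ge0 ?powR_ge0 //.
  by rewrite lerDl.
have bB : b <= B.
  rewrite -{1}(powRK2 al0 b0) /B ge0_ler_powR // ?nnegrE ?powR_ge0 ?addr_ge0 ?powR_ge0 //.
  by rewrite lerDl.
have A0 : 0 <= A by rewrite powR_ge0.
have h1 := conv4 al1 a0 aA b0.
have h2 := conv4 al1 b0 bB A0.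
rewrite hA in h1; rewrite hB in h2.
rewrite (addrC B A) in h2.
rewrite (addrC b A) in h2.
rewrite -addrA lerD2l in h1; rewrite -addrA lerD2l in h2.
apply: le_trans h2; rewrite [leLHS]addrC lerD2l (addrC (_ `^ al) x); exact: h1.
Qed.

Lemma energy_ge0 (R : realType) (al : R) K s : (0 <= energy al K s)%E.
Proof. by apply: integral_ge0 => t _; rewrite lee_fin powR_ge0. Qed.

Lemma cost_ge0 (R : realType) (al : R) F K s : admissible_F F ->
  (0 <= cost al F K s)%E.
Proof. by case=> _ F0 _ _; rewrite adde_ge0 // energy_ge0. Qed.

Lemma OPT_le_cost (R : realType) (al : R) F (K : {fset job R}) s :
  K != fset0 -> feasible K s -> (OPT al F K <= cost al F K s)%E.
Proof.
move=> K0 fs; rewrite /OPT (negbTE K0).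
by apply: ereal_inf_lbound; exists s.
Qed.

Lemma OPT_ge0 (R : realType) (al : R) F K : admissible_F F ->
  (0 <= OPT al F K)%E.
Proof.
move=> aF; rewrite /OPT; case: ifP => // _.
apply/ereal_infP => y [s _ <-]; exact: cost_ge0.
Qed.

Lemma Lnorm_form (R : realType) (al : R) (g : R -> R) : (forall t, 0 <= g t) ->
  Lnorm (@lebesgue_measure R) al%:E (EFin \o g) =
  ((\int[lebesgue_measure]_t ((g t) `^ al)%:E) `^ al^-1)%E.
Proof.
move=> g0; rewrite unlock /=; congr (_ `^ _)%E.
by apply: eq_integral => t _ /=; rewrite ger0_norm.
Qed.

Lemma split_fin (R : realType) (x y : \bar R) c : (0 <= x)%E -> (0 <= y)%E ->
  (x + y)%E = c%:E -> exists a b, [/\ x = a%:E, y = b%:E, 0 <= a, 0 <= b & c = a + b].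
Proof.
case: x => [a||]; case: y => [b||] //= a0 b0 h.
move: a0 b0; rewrite !lee_fin => a0 b0.
by exists a, b; split => //; case: h => <-.
Qed.

Lemma sum_sub (R : realType) (T : choiceType) (K A : {fset T}) (P : pred T)
  (f : T -> R) : (forall x, (x \in A) = (x \in K) && P x) ->
  \sum_(j <- K | P j) f j = \sum_(j <- A) f j.
Proof.
move=> HA; rewrite -big_filter; apply: perm_big; apply: uniq_perm.
- by rewrite filter_uniq // fset_uniq.
- exact: fset_uniq.
- by move=> x; rewrite mem_filter HA andbC.
Qed.

Lemma meas_sum (R : realType) (K : {fset job R}) (s : schedule R) :
  feasible K s -> measurable_fun [set: R] (fun t => \sum_(j <- K) s j t).
Proof.
move=> fs.
have -> : (fun t => \sum_(j <- K) s j t) =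
  (fun t => \sum_(j <- K) (fun j t => if j \in K then s j t else 0) j t).
  apply: funext => t; apply: eq_big_seq => j jK; by rewrite jK.
apply: (measurable_sum (enum_fset K) (h := fun j t => if j \in K then s j t else 0)) => j.
case jK: (j \in K).
  by case: (fs j jK).
exact: measurable_cst.
Qed.

Lemma combine (R : realType) (al : R) F (J Jh : {fset job R}) s1 s2 c1 c2 :
  1 < al -> admissible_F F -> Jh != fset0 ->
  feasible (J `&` Jh)%fset s1 -> feasible (Jh `\` J)%fset s2 ->
  cost al F (J `&` Jh)%fset s1 = c1%:E -> cost al F (Jh `\` J)%fset s2 = c2%:E ->
  (OPT al F Jh <= (((c1 `^ al^-1) + (c2 `^ al^-1)) `^ al)%:E)%E.
Proof.
move=> al1 aF Jh0 fs1 fs2 hc1 hc2.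
have al0 : al != 0 by rewrite gt_eqF // (lt_trans _ al1).
set A := (J `&` Jh)%fset in fs1 hc1 *; set B := (Jh `\` J)%fset in fs2 hc2 *.
pose s : schedule R := fun j => if j \in J then s1 j else s2 j.
have fs : feasible Jh s.
  move=> j jJh; rewrite /s; case: ifP => jJ.
  - by apply: fs1; rewrite !inE jJ jJh.
  - by apply: fs2; rewrite !inE jJ jJh.
apply: le_trans (OPT_le_cost _ _ Jh0 fs) _.
case: aF => Fdep F0 Fsub Fmon.
have [e1 [f1 [He1 Hf1 e10 f10 Hc1]]] :=
  split_fin (energy_ge0 al A s1) (F0 A (work s1)) hc1.
have [e2 [f2 [He2 Hf2 e20 f20 Hc2]]] :=
  split_fin (energy_ge0 al B s2) (F0 B (work s2)) hc2.
have HF : (F Jh (work s) <= f1%:E + f2%:E)%E.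
  have -> : Jh = (A `|` B)%fset.
    apply/fsetP => x; rewrite !inE; by case: (x \in J); case: (x \in Jh).
  apply: le_trans (Fsub _ _ _) _.
  rewrite -Hf1 -Hf2.
  have -> : F A (work s) = F A (work s1).
    apply: Fdep => j jA t; rewrite /work /s.
    by move: jA; rewrite !inE => /andP [-> _].
  have -> : F B (work s) = F B (work s2).
    apply: Fdep => j jB t; rewrite /work /s.
    by move: jB; rewrite !inE => /andP [/negbTE -> _].
  by [].
pose g1 := fun t => \sum_(j <- A) s1 j t.
pose g2 := fun t => \sum_(j <- B) s2 j t.
have g10 : forall t, 0 <= g1 t.
  move=> t; rewrite /g1 big_seq; apply: sumr_ge0 => j jA.
  by case: (fs1 j jA) => + _ _ _; apply.
have g20 : forall t, 0 <= g2 t.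
  move=> t; rewrite /g2 big_seq; apply: sumr_ge0 => j jB.
  by case: (fs2 j jB) => + _ _ _; apply.
have Hsum : forall t, \sum_(j <- Jh) s j t = g1 t + g2 t.
  move=> t; rewrite (bigID (fun j => j \in J)) /=.
  congr (_ + _).
  - rewrite /g1 -(@sum_sub R _ Jh A (fun j => j \in J) (fun j => s1 j t)); last first.
      by move=> x; rewrite !inE andbC.
    rewrite big_mkcond [RHS]big_mkcond; apply: eq_bigr => j _.
    by rewrite /s; case: (j \in J).
  - rewrite /g2 -(@sum_sub R _ Jh B (fun j => j \notin J) (fun j => s2 j t)); last first.
      by move=> x; rewrite !inE andbC.
    rewrite big_mkcond [RHS]big_mkcond; apply: eq_bigr => j _.
    by rewrite /s; case: (j \in J).
have HE : energy al Jh s = (\int[lebesgue_measure]_t ((g1 t + g2 t) `^ al)%:E)%E.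
  by apply: eq_integral => t _; rewrite Hsum.
have mk := minkowski_EFin (@lebesgue_measure R) (meas_sum fs1) (meas_sum fs2) (ltW al1).
rewrite (@Lnorm_form R al (g1 \+ g2)%R) in mk; last by move=> t; rewrite addr_ge0.
rewrite (@Lnorm_form R al g1) // (@Lnorm_form R al g2) // in mk.
rewrite -/(energy al A s1) -/(energy al B s2) He1 He2 !poweR_EFin -EFinD -HE in mk.
have E0 := energy_ge0 al Jh s.
have [e He] : exists e, energy al Jh s = e%:E.
  move: E0 mk; case: (energy al Jh s) => [e||] //= _.
    by exists e.
  by rewrite invr_eq0 (negbTE al0).
rewrite He poweR_EFin lee_fin in mk.
have e0 : 0 <= e by rewrite -lee_fin -He.
set a := e1 `^ al^-1 in mk; set b := e2 `^ al^-1 in mk.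
have a0 : 0 <= a by rewrite powR_ge0.
have b0 : 0 <= b by rewrite powR_ge0.
have hab : e <= (a + b) `^ al.
  have := @ge0_ler_powR R al (le_trans ler01 (ltW al1)) (e `^ al^-1) (a + b).
  rewrite !nnegrE powR_ge0 addr_ge0 // powRK1 //; by apply.
rewrite /cost He.
apply: (@le_trans _ _ (e%:E + (f1%:E + f2%:E))%E); first by rewrite leeD2l.
rewrite -!EFinD lee_fin.
have kr := key_real (ltW al1) a0 b0 f10 f20.
have ea : a `^ al = e1 by rewrite /a powRK1.
have eb : b `^ al = e2 by rewrite /b powRK1.
rewrite ea eb -Hc1 -Hc2 in kr.
apply: le_trans kr.
by rewrite addrA lerD2r lerD2r.
Qed.

Lemma powRV (R : realType) (x r : R) : 0 < x -> (x^-1) `^ r = (x `^ r)^-1.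
Proof.
move=> x0.
have xi : 0 <= x^-1 by rewrite invr_ge0 ltW.
have h := @powRM R x x^-1 r (ltW x0) xi.
rewrite mulfV ?gt_eqF // powR1 in h.
have xr0 : x `^ r != 0 by rewrite gt_eqF // powR_gt0.
apply: (mulfI xr0); by rewrite -h mulfV.
Qed.

Lemma le_OPT_pow (R : realType) (al : R) F (K : {fset job R}) (L oa : R) :
  1 < al -> admissible_F F -> K != fset0 ->
  (forall s, feasible K s -> forall c, cost al F K s = c%:E -> L <= c `^ al^-1) ->
  OPT al F K = oa%:E -> L <= oa `^ al^-1.
Proof.
move=> al1 aF K0 H HO.
have al0 : al != 0 by rewrite gt_eqF // (lt_trans _ al1).
have [L0|Lp] := lerP L 0.
  by apply: le_trans L0 _; rewrite powR_ge0.
have h : ((L `^ al)%:E <= OPT al F K)%E.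
  rewrite /OPT (negbTE K0); apply/ereal_infP => y [s fs <-].
  have := cost_ge0 al K s aF.
  case E: (cost al F K s) => [c||] // c0.
  rewrite lee_fin.
  have := H s fs c E.
  have c0' : 0 <= c by rewrite -lee_fin.
  move=> Hc.
  have := @ge0_ler_powR R al (le_trans ler01 (ltW al1)) L (c `^ al^-1).
  rewrite !nnegrE powR_ge0 (ltW Lp) powRK1 //; by apply.
  by rewrite leey.
rewrite HO lee_fin in h.
have oa0 : 0 <= oa by rewrite -lee_fin -HO OPT_ge0.
have ali : 0 <= al^-1 by rewrite invr_ge0 (le_trans ler01 (ltW al1)).
have := @ge0_ler_powR R al^-1 ali (L `^ al) oa.
rewrite !nnegrE powR_ge0 oa0 powRK2 ?(ltW Lp) //; by apply.
Qed.

Lemma feasible_sub (R : realType) (K A : {fset job R}) s :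
  (forall j, j \in A -> j \in K) -> feasible K s -> feasible A s.
Proof. by move=> sub fs j jA; apply: fs; apply: sub. Qed.

Lemma cost_sub (R : realType) (al : R) F (J Jh : {fset job R}) s :
  1 < al -> admissible_F F -> feasible J s ->
  (cost al F (J `&` Jh)%fset s <= cost al F J s)%E.
Proof.
move=> al1 [_ _ _ Fmon] fs.
have fsA : feasible (J `&` Jh)%fset s.
  by apply: feasible_sub fs => j; rewrite in_fsetI => /andP[].
apply: leeD.
- rewrite /energy; apply: ge0_le_integral => //.
  + by move=> t _; rewrite lee_fin powR_ge0.
  + apply/measurable_realfun.measurable_EFinP.
    exact: (measurableT_comp (measurable_realfun.measurable_powR _) (meas_sum fsA)).
  + apply/measurable_realfun.measurable_EFinP.
    exact: (measurableT_comp (measurable_realfun.measurable_powR _) (meas_sum fs)).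
  + move=> t _; rewrite lee_fin.
    have hs : \sum_(j <- (J `&` Jh)%fset) s j t <= \sum_(j <- J) s j t.
      rewrite [leRHS](bigID (fun j => j \in Jh)) /=.
      rewrite -(@sum_sub R _ J (J `&` Jh)%fset (fun j => j \in Jh) (fun j => s j t)); last first.
        by move=> x; rewrite in_fsetI.
      rewrite lerDl big_seq_cond; apply: sumr_ge0 => j /andP [jJ _].
      by case: (fs j jJ) => + _ _ _; apply.
    have h0 : 0 <= \sum_(j <- (J `&` Jh)%fset) s j t.
      rewrite big_seq; apply: sumr_ge0 => j jA.
      by case: (fsA j jA) => + _ _ _; apply.
    apply: (@ge0_ler_powR R al (le_trans ler01 (ltW al1))).
    + by rewrite nnegrE.
    + by rewrite nnegrE (le_trans h0 hs).
    + exact: hs.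
- by apply: Fmon => //; exact: fsubsetIl.
Qed.

Unset Implicit Arguments.

Theorem corollary1 (R : realType) (alpha : R) (F : quality_cost R)
  (J Jh : {fset job R}) :
  1 < alpha -> admissible_F F ->
  valid_jobs J -> valid_jobs Jh ->
  (0 < OPT alpha F Jh < +oo)%E ->
  (eta2 alpha F J Jh <= 1)%E ->
  ((((1 - (fine (eta2 alpha F J Jh)) `^ alpha^-1) `^ alpha)%:E * OPT alpha F Jh
      <= OPT alpha F (J `&` Jh)%fset)%E
   /\
   forall (OfflineAlg : {fset job R} -> schedule R) (gamma_off lambda : R),
     (forall K, valid_jobs K -> feasible K (OfflineAlg K)) ->
     (forall K, valid_jobs K ->
        (cost alpha F K (OfflineAlg K) <= gamma_off%:E * OPT alpha F K)%E) ->
     0 < lambda <= 1 -> lambda * gamma_off <= 1 ->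
     (cost alpha F J (OfflineAlg J) <= lambda%:E * cost alpha F Jh (OfflineAlg Jh))%E ->
     (((1 - (lambda * gamma_off) `^ alpha^-1) `^ alpha)%:E <= eta2 alpha F J Jh)%E).
Proof.
move=> al1 aF vJ vJh /andP[Opos Ofin] eta1.
set al := alpha in al1 *.
have al0 : al != 0 by rewrite gt_eqF // (lt_trans _ al1).
have alge0 : 0 <= al by rewrite (le_trans ler01 (ltW al1)).
have ali : 0 <= al^-1 by rewrite invr_ge0.
have Jh0 : Jh != fset0.
  by apply/negP => /eqP E; move: Opos; rewrite /OPT E eqxx ltxx.
have [oJ Ho] : exists oJ, OPT al F Jh = oJ%:E.
  by move: Opos Ofin; case: (OPT al F Jh) => [oJ||] //; exists oJ.
rewrite Ho lte_fin in Opos.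
set A := (J `&` Jh)%fset; set B := (Jh `\` J)%fset.
have OB0 := OPT_ge0 al B aF.
have [ob Hob] : exists ob, OPT al F B = ob%:E.
  move: eta1 OB0; rewrite /eta2 -/B Ho inver gt_eqF //.
  case: (OPT al F B) => [ob||] //=; first by exists ob.
  by rewrite gt0_mulye ?lte_fin ?invr_gt0 // leye_eq.
have ob0 : 0 <= ob by rewrite -lee_fin -Hob.
set r := ob / oJ.
have Heta : eta2 al F J Jh = r%:E.
  by rewrite /eta2 -/B Ho Hob inver gt_eqF // -EFinM.
rewrite Heta /= in eta1 *.
have r0 : 0 <= r by rewrite divr_ge0 // ltW.
rewrite lee_fin in eta1.
set v := r `^ al^-1.
have v1 : v <= 1.
  have := @ge0_ler_powR R al^-1 ali r 1; rewrite !nnegrE r0 ler01 powR1 /=.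
  by apply.
set t := oJ `^ al^-1.
have t0 : 0 < t by rewrite powR_gt0.
have vt : v = ob `^ al^-1 / t.
  by rewrite /v /r powRM // ?invr_ge0 ?(ltW Opos) // powRV.
have P1 : (((1 - v) `^ al)%:E * oJ%:E <= OPT al F A)%E.
  have OA0 := OPT_ge0 al A aF.
  case EA: (OPT al F A) => [oa||]; last 2 first.
  - by rewrite leey.
  - by rewrite EA in OA0.
  have oa0 : 0 <= oa by rewrite -lee_fin -EA.
  suff claim : t <= oa `^ al^-1 + ob `^ al^-1.
    rewrite -EFinM lee_fin.
    have h1 : 1 - v <= oa `^ al^-1 / t.
      rewrite ler_pdivlMr // mulrBl mul1r vt divfK ?gt_eqF //.
      by rewrite lerBlDr.
    have h2 : (1 - v) `^ al <= (oa `^ al^-1 / t) `^ al.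
      apply: (@ge0_ler_powR R al alge0) => //.
        by rewrite nnegrE subr_ge0.
      by rewrite nnegrE divr_ge0 ?powR_ge0 ?ltW.
    rewrite (@powRM R (oa `^ al^-1) t^-1 al) ?powR_ge0 ?invr_ge0 ?(ltW t0) // in h2.
    rewrite (powRV al t0) /t (powRK1 al0 oa0) (powRK1 al0 (ltW Opos)) in h2.
    rewrite -(ler_pM2r Opos) in h2.
    by apply: le_trans h2 _; rewrite divfK ?gt_eqF.
  have [A0|A0] := eqVneq A fset0.
    have EB : B = Jh.
      apply/fsetP => x; rewrite !inE.
      have : x \in A = false by rewrite A0 in_fset0.
      rewrite /A in_fsetI.
      by case: (x \in J); case: (x \in Jh).
    move: EA; rewrite /OPT A0 eqxx => -[<-].
    rewrite EB Ho in Hob; case: Hob => <-.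
    by rewrite lerDr powR_ge0.
  have [B0|B0] := eqVneq B fset0.
    have EA' : A = Jh.
      apply/fsetP => x; rewrite !inE.
      have : x \in B = false by rewrite B0 in_fset0.
      rewrite /B in_fsetD.
      by case: (x \in J); case: (x \in Jh).
    move: Hob; rewrite /OPT B0 eqxx => -[<-].
    rewrite EA' Ho in EA; case: EA => <-.
    by rewrite lerDl powR_ge0.
  have step1 : forall s2, feasible B s2 -> forall c2, cost al F B s2 = c2%:E ->
      t - c2 `^ al^-1 <= oa `^ al^-1.
    move=> s2 fs2 c2 hc2.
    apply: (le_OPT_pow al1 aF A0 _ EA) => s1 fs1 c1 hc1.
    have := combine al1 aF Jh0 fs1 fs2 hc1 hc2; rewrite Ho lee_fin => h.
    have h' : t <= c1 `^ al^-1 + c2 `^ al^-1.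
      have := @ge0_ler_powR R al^-1 ali oJ ((c1 `^ al^-1 + c2 `^ al^-1) `^ al).
      rewrite !nnegrE powR_ge0 (ltW Opos) powRK2 ?addr_ge0 ?powR_ge0 //.
      by apply.
    by rewrite lerBlDr.
  have step2 : t - oa `^ al^-1 <= ob `^ al^-1.
    apply: (le_OPT_pow al1 aF B0 _ Hob) => s2 fs2 c2 hc2.
    have := step1 s2 fs2 c2 hc2.
    by rewrite lerBlDr addrC -lerBlDr.
  by rewrite -lerBlDl.
split; first by rewrite Ho.
move=> Off gam lam fOff hOff /andP[lam0 lam1] lg hOFF.
have g0 : 0 <= gam.
  have := hOff Jh vJh; rewrite Ho -EFinM => h.
  have := le_trans (cost_ge0 al Jh (Off Jh) aF) h.
  by rewrite lee_fin pmulr_lge0.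
have hA : (OPT al F A <= ((lam * gam) * oJ)%:E)%E.
  apply: (@le_trans _ _ (cost al F J (Off J))).
    have [A0|A0] := eqVneq A fset0.
      by rewrite /OPT A0 eqxx cost_ge0.
    apply: le_trans (OPT_le_cost _ _ A0 _) _.
      by apply: feasible_sub (fOff J vJ) => j; rewrite in_fsetI => /andP[].
    exact: (cost_sub Jh al1 aF (fOff J vJ)).
  apply: le_trans hOFF _.
  rewrite -mulrA EFinM.
  apply: lee_wpmul2l; first by rewrite lee_fin ltW.
  by rewrite EFinM -Ho; apply: hOff.
have h3 : (1 - v) `^ al <= lam * gam.
  have := le_trans P1 hA; rewrite -EFinM lee_fin.
  by rewrite ler_pM2r.
rewrite lee_fin.
have lg0 : 0 <= lam * gam by rewrite mulr_ge0 // ltW.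
set w := (lam * gam) `^ al^-1.
have w1 : w <= 1.
  have := @ge0_ler_powR R al^-1 ali (lam * gam) 1; rewrite !nnegrE lg0 ler01 powR1 /=.
  by apply.
have h4 : 1 - v <= w.
  have := @ge0_ler_powR R al^-1 ali ((1 - v) `^ al) (lam * gam).
  rewrite !nnegrE powR_ge0 lg0 powRK2 ?subr_ge0 //.
  by apply.
have h5 : (1 - w) `^ al <= v `^ al.
  apply: (@ge0_ler_powR R al alge0).
  - by rewrite nnegrE subr_ge0.
  - by rewrite nnegrE powR_ge0.
  - by rewrite lerBlDr addrC -lerBlDr.
by rewrite /v powRK1 in h5.
Qed.
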